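(* Let $\Bbbk$ be a commutative ring of global dimension zero and let $C$ be a $\Bbbk$-coalgebra. The colinear Hattori--Stallings rank $[M]\mapsto \mathrm{tr}^C(\mathrm{id}_M)$ defines a homomorphism of abelian groups \[K_0(\mathrm{CoMod}_C^{\mathrm{fg}})\longrightarrow \mathrm{coHH}_0(C).\]
   Context: $\Bbbk$ is a finite product of fields; $\otimes=\otimes_\Bbbk$. $C=(C,\Delta,\varepsilon)$ is a coassociative counital $\Bbbk$-coalgebra and $\mathrm{coHH}_0(C)=\ker(\Delta-\tau\circ\Delta\colon C\to C\otimes C)$, $\tau$ the swap. $\mathrm{CoMod}_C^{\mathrm{fg}}$ is the category of right $C$-comodules that are finitely generated as $\Bbbk$-modules; $K_0(\mathrm{CoMod}_C^{\mathrm{fg}})$ is the free abelian group on isomorphism classes of such comodules modulo $[M]=[M']+[M'']$ for every short exact sequence $0\to M'\to M\to M''\to 0$ of right $C$-comodules in this category. For such $M$ with coaction $m\mapsto\sum m_{(0)}\otimes m_{(1)}$, a $\Bbbk$-basis $e_1,\dots,e_n$ and dual basis $e_i^*$, and a $C$-colinear $f\colon M\to M$, the colinear Hattori--Stallings trace is $\mathrm{tr}^C(f)=\sum_{i=1}^n\sum e_i^*(f(e_{i(0)}))\,e_{i(1)}\in C$, which lies in $\mathrm{coHH}_0(C)$; the rank of $M$ is $\mathrm{tr}^C(\mathrm{id}_M)$. *)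

(* Defs.v *)
From HB Require Import structures.
From mathcomp Require Import all_boot all_order all_algebra.
Set Implicit Arguments. Unset Strict Implicit. Unset Printing Implicit Defensive.
Import GRing.Theory.
Local Open Scope ring_scope.

(* "k is a commutative ring of global dimension zero", i.e. a finite product
   of fields: k has a complete family of pairwise orthogonal nonzero
   idempotents e_i such that each factor e_i k is a field (every nonzero
   element of e_i k is invertible in e_i k, whose unit is e_i). *)
Definition fin_prod_of_fields (k : comNzRingType) : Prop :=
  exists (n : nat) (e : 'I_n -> k),
    [/\ forall i, e i * e i = e i /\ e i != 0,
        forall i j, i != j -> e i * e j = 0,
        \sum_(i < n) e i = 1 &
        forall i x, e i * x != 0 -> exists y, e i * x * y = e i].

Section Defs.
Variable k : comNzRingType.

Definition klinear (U V : lmodType k) (f : U -> V) : Prop :=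
  forall (a : k) (u v : U), f (a *: u + v) = a *: f u + f v.

Definition kform (U : lmodType k) (f : U -> k) : Prop :=
  forall (a : k) (u v : U), f (a *: u + v) = a * f u + f v.

Definition bilinear_map (U V W : lmodType k) (b : U -> V -> W) : Prop :=
  (forall v, klinear (fun u => b u v)) /\ (forall u, klinear (b u)).

Definition trilinear_map (U V W X : lmodType k) (t : U -> V -> W -> X) : Prop :=
  [/\ forall v w, klinear (fun u => t u v w),
      forall u w, klinear (fun v => t u v w) &
      forall u v, klinear (t u v)].

(* Elements of U (x) V are represented by finite lists of pure tensors;
   two representations are equal in U (x) V iff every bilinear map agrees
   on them (universal property of the tensor product over k). *)
Definition teq2 (U V : lmodType k) (s t : seq (U * V)) : Prop :=
  forall (W : lmodType k) (b : U -> V -> W), bilinear_map b ->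
    \sum_(p <- s) b p.1 p.2 = \sum_(p <- t) b p.1 p.2.

Definition teq3 (U V W : lmodType k) (s t : seq ((U * V) * W)) : Prop :=
  forall (X : lmodType k) (b : U -> V -> W -> X), trilinear_map b ->
    \sum_(p <- s) b p.1.1 p.1.2 p.2 = \sum_(p <- t) b p.1.1 p.1.2 p.2.

Definition is_coalgebra (C : lmodType k) (D : C -> seq (C * C)) (eps : C -> k)
  : Prop :=
  [/\ forall (a : k) (u v : C),
        teq2 (D (a *: u + v)) ([seq (a *: p.1, p.2) | p <- D u] ++ D v),
      kform eps,
      forall c, teq3 [seq ((q.1, q.2), p.2) | p <- D c, q <- D p.1]
                     [seq ((p.1, q.1), q.2) | p <- D c, q <- D p.2],
      forall c, \sum_(p <- D c) eps p.1 *: p.2 = c &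
      forall c, \sum_(p <- D c) eps p.2 *: p.1 = c].

(* coHH_0(C) = ker(Delta - tau o Delta). *)
Definition in_coHH0 (C : lmodType k) (D : C -> seq (C * C)) (c : C) : Prop :=
  teq2 (D c) [seq (p.2, p.1) | p <- D c].

Variables (C : lmodType k) (D : C -> seq (C * C)) (eps : C -> k).

(* A right C-comodule which is finitely generated (projective) over k,
   together with a chosen finite dual basis (projective coordinate system)
   {e_i, e_i^*} : m = sum_i e_i^*(m) e_i. *)
Record fgComod := FgComod {
  cm_sort :> lmodType k;
  cm_rho : cm_sort -> seq (cm_sort * C);
  cm_rho_lin : forall (a : k) (u v : cm_sort),
      teq2 (cm_rho (a *: u + v)) ([seq (a *: p.1, p.2) | p <- cm_rho u] ++ cm_rho v);
  cm_coassoc : forall m,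
      teq3 [seq ((q.1, q.2), p.2) | p <- cm_rho m, q <- cm_rho p.1]
           [seq ((p.1, q.1), q.2) | p <- cm_rho m, q <- D p.2];
  cm_counit : forall m, \sum_(p <- cm_rho m) eps p.2 *: p.1 = m;
  cm_dim : nat;
  cm_gen : 'I_cm_dim -> cm_sort;
  cm_coord : 'I_cm_dim -> cm_sort -> k;
  cm_coord_lin : forall i, kform (cm_coord i);
  cm_dual_basis : forall m, \sum_(i < cm_dim) cm_coord i m *: cm_gen i = m
}.

Arguments cm_rho : clear implicits.
Arguments cm_dim : clear implicits.
Arguments cm_gen : clear implicits.
Arguments cm_coord : clear implicits.

Definition colinear (M N : fgComod) (f : M -> N) : Prop :=
  klinear f /\
  forall m, teq2 (cm_rho N (f m)) [seq (f p.1, p.2) | p <- cm_rho M m].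

Definition comod_iso (M N : fgComod) : Prop :=
  exists f : M -> N, colinear f /\ bijective f.

Definition comod_ses (M' M M'' : fgComod) : Prop :=
  exists (f : M' -> M) (g : M -> M''),
    [/\ colinear f, colinear g, injective f, (forall m'', exists m, g m = m'') &
        forall m, g m = 0 <-> exists m', f m' = m].

Definition tr_colin (M : fgComod) (f : M -> M) : C :=
  \sum_(i < cm_dim M) \sum_(p <- cm_rho M (f (cm_gen M i)))
     cm_coord M i p.1 *: p.2.
(* tr^C(f) = sum_i sum e_i^*(f(e_{i(0)})) e_{i(1)}; for f = id the two
   placements of f coincide. *)
Definition colin_rank (M : fgComod) : C := tr_colin (@id M).

(* Free abelian group on fg comodules: finite formal Z-combinations.
   K0 is its quotient by the subgroup K0rel generated by
   [M] - [N] for M ~= N (generators are isomorphism classes) and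
   [M] - [M'] - [M''] for short exact sequences. *)
Definition formal_sum := seq (int * fgComod).

Inductive K0rel : formal_sum -> Prop :=
| K0rel_nil : K0rel [::]
| K0rel_iso M N : comod_iso M N -> K0rel [:: (1 : int, M); (-1 : int, N)]
| K0rel_ses M' M M'' : comod_ses M' M M'' ->
    K0rel [:: (1 : int, M); (-1 : int, M'); (-1 : int, M'')]
| K0rel_add x y : K0rel x -> K0rel y -> K0rel (x ++ y)
| K0rel_opp x : K0rel x -> K0rel [seq (- p.1, p.2) | p <- x].

Definition rankZ (x : formal_sum) : C :=
  \sum_(p <- x) colin_rank p.2 *~ p.1.

End Defs.

(* Main.v *)
Require Import Defs.
From HB Require Import structures.
From mathcomp Require Import all_boot all_order all_algebra.
From Stdlib Require Import ClassicalEpsilon.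
Import GRing.Theory.
Local Open Scope ring_scope.
Set Implicit Arguments. Unset Strict Implicit.

Section Aux.
Variable k : comNzRingType.

Lemma klin0 (U V : lmodType k) (f : U -> V) : klinear f -> f 0 = 0.
Proof.
move=> hf; have := hf 1 0 0; rewrite !scale1r addr0 => h.
by apply: (addrI (f 0)); rewrite addr0 -h.
Qed.

Lemma klinD (U V : lmodType k) (f : U -> V) : klinear f -> forall u v, f (u + v) = f u + f v.
Proof. by move=> hf u v; have := hf 1 u v; rewrite !scale1r. Qed.

Lemma klinZ (U V : lmodType k) (f : U -> V) : klinear f -> forall a u, f (a *: u) = a *: f u.
Proof. by move=> hf a u; have := hf a u 0; rewrite !addr0 klin0 // addr0. Qed.

Lemma klin_sum (U V : lmodType k) (f : U -> V) (I : Type) (r : seq I) (y : I -> U) :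
  klinear f -> f (\sum_(i <- r) y i) = \sum_(i <- r) f (y i).
Proof.
move=> hf; elim: r => [|x r IH]; first by rewrite !big_nil klin0.
by rewrite !big_cons klinD // IH.
Qed.

Lemma kform0 (U : lmodType k) (f : U -> k) : kform f -> f 0 = 0.
Proof.
move=> hf; have := hf 1 0 0; rewrite scale1r addr0 mul1r => h.
by apply: (addrI (f 0)); rewrite addr0 -h.
Qed.

Lemma kformD (U : lmodType k) (f : U -> k) : kform f -> forall u v, f (u + v) = f u + f v.
Proof. by move=> hf u v; have := hf 1 u v; rewrite !scale1r mul1r. Qed.

Lemma kformZ (U : lmodType k) (f : U -> k) : kform f -> forall a u, f (a *: u) = a * f u.
Proof. by move=> hf a u; have := hf a u 0; rewrite !addr0 kform0 // addr0. Qed.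

Lemma kform_sum (U : lmodType k) (f : U -> k) (I : Type) (r : seq I) (y : I -> U) :
  kform f -> f (\sum_(i <- r) y i) = \sum_(i <- r) f (y i).
Proof.
move=> hf; elim: r => [|x r IH]; first by rewrite !big_nil kform0.
by rewrite !big_cons kformD // IH.
Qed.

Lemma rep_lin (X U V W : lmodType k) (rho : X -> seq (U * V))
  (hl : forall a u v, teq2 (rho (a *: u + v)) ([seq (a *: p.1, p.2) | p <- rho u] ++ rho v))
  (b : U -> V -> W) (hb : bilinear_map b) :
  klinear (fun m => \sum_(p <- rho m) b p.1 p.2).
Proof.
move=> a u v; rewrite (hl a u v W b hb) big_cat big_map /= scaler_sumr.
congr (_ + _); apply: eq_bigr => p _; by rewrite (klinZ (hb.1 _)).
Qed.

Lemma bil_scal (U V : lmodType k) (xi : U -> k) (hxi : kform xi) :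
  bilinear_map (fun (x : U) (c : V) => xi x *: c).
Proof.
split=> [v a x y|u a x y] /=; first by rewrite hxi scalerDl scalerA.
by rewrite scalerDr !scalerA mulrC.
Qed.

End Aux.

Section Main.
Variable k : comNzRingType.
Variables (C : lmodType k) (D : C -> seq (C * C)) (eps : C -> k).
Notation FC := (fgComod D eps).
Notation rho M := (@cm_rho _ _ D eps M).
Notation dim M := (@cm_dim _ _ D eps M).
Notation gen M := (@cm_gen _ _ D eps M).
Notation crd M := (@cm_coord _ _ D eps M).

Definition Phi (M : FC) (m : cm_sort M) (xi : cm_sort M -> k) : C :=
  \sum_(p <- rho M m) xi p.1 *: p.2.

Lemma Phi_lin (M : FC) xi : kform xi -> klinear (fun m : cm_sort M => Phi m xi).
Proof. move=> hxi; exact: (rep_lin (@cm_rho_lin _ _ _ _ M) (bil_scal C hxi)). Qed.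

Lemma Phi_sum (M : FC) xi I (r : seq I) (a : I -> k) (y : I -> cm_sort M) :
  kform xi -> Phi (\sum_(i <- r) a i *: y i) xi = \sum_(i <- r) a i *: Phi (y i) xi.
Proof.
move=> hxi; have hl := Phi_lin hxi.
have := klin_sum r (fun i => a i *: y i) hl; rewrite /= => ->.
by apply: eq_bigr => i _; rewrite (klinZ hl).
Qed.

Lemma Phi_fun (M : FC) (m : cm_sort M) xi1 xi2 : (forall x, xi1 x = xi2 x) -> Phi m xi1 = Phi m xi2.
Proof. by move=> h; apply: eq_bigr => p _; rewrite h. Qed.

Lemma Phi_comb (M : FC) (m : cm_sort M) I (r : seq I) (a : I -> k) (xi : I -> cm_sort M -> k) :
  Phi m (fun x => \sum_(i <- r) a i * xi i x) = \sum_(i <- r) a i *: Phi m (xi i).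
Proof.
rewrite /Phi; under eq_bigr do rewrite scaler_suml.
rewrite exchange_big /=; apply: eq_bigr => i _; rewrite scaler_sumr.
by apply: eq_bigr => p _; rewrite scalerA.
Qed.

Lemma rank_Phi (M : FC) : colin_rank M = \sum_(j < dim M) Phi (gen M j) (crd M j).
Proof. by []. Qed.

End Main.
Section M2.
Variable k : comNzRingType.
Variables (C : lmodType k) (D : C -> seq (C * C)) (eps : C -> k).
Notation FC := (fgComod D eps).
Notation rho M := (@cm_rho _ _ D eps M).
Notation dim M := (@cm_dim _ _ D eps M).
Notation gen M := (@cm_gen _ _ D eps M).
Notation crd M := (@cm_coord _ _ D eps M).

Lemma indep_one (M : FC) I (r : seq I) (x : I -> cm_sort M) (xi : I -> cm_sort M -> k)
  (hxi : forall i, kform (xi i)) :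
  \sum_(i <- r) Phi (x i) (xi i) =
  \sum_(j < dim M) Phi (gen M j) (fun m => \sum_(i <- r) crd M j (x i) * xi i m).
Proof.
transitivity (\sum_(i <- r) \sum_(j < dim M) crd M j (x i) *: Phi (gen M j) (xi i)).
  apply: eq_bigr => i _.
  rewrite -Phi_sum //.
  by rewrite (cm_dual_basis (x i)).
rewrite exchange_big /=; apply: eq_bigr => j _; by rewrite Phi_comb.
Qed.
End M2.
Section M3.
Variable k : comNzRingType.
Variables (C : lmodType k) (D : C -> seq (C * C)) (eps : C -> k).
Notation FC := (fgComod D eps).
Notation rho M := (@cm_rho _ _ D eps M).
Notation dim M := (@cm_dim _ _ D eps M).
Notation gen M := (@cm_gen _ _ D eps M).
Notation crd M := (@cm_coord _ _ D eps M).

Lemma Phi_addxi (M : FC) (m : cm_sort M) f1 f2 :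
  Phi m f1 + Phi m f2 = Phi m (fun x => f1 x + f2 x).
Proof. rewrite /Phi -big_split; apply: eq_bigr => p _; by rewrite scalerDl. Qed.

Lemma indep2 (M : FC) n1 n2 (x : 'I_n1 -> cm_sort M) (xi : 'I_n1 -> cm_sort M -> k)
  (y : 'I_n2 -> cm_sort M) (zeta : 'I_n2 -> cm_sort M -> k)
  (hxi : forall i, kform (xi i)) (hzeta : forall i, kform (zeta i))
  (hb : forall m, \sum_i xi i m *: x i + \sum_i zeta i m *: y i = m) :
  \sum_i Phi (x i) (xi i) + \sum_i Phi (y i) (zeta i) = colin_rank M.
Proof.
rewrite [X in X + _]indep_one // [X in _ + X]indep_one // rank_Phi -big_split /=; apply: eq_bigr => j _.
rewrite Phi_addxi; apply: Phi_fun => m.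
have hc := @cm_coord_lin _ _ D eps M j.
rewrite -{3}(hb m) (kformD hc) !kform_sum //.
by congr (_ + _); apply: eq_bigr => i _; rewrite (kformZ hc) mulrC.
Qed.

Lemma transfer (M N : FC) (f : cm_sort M -> cm_sort N) (hf : colinear f)
  (m : cm_sort M) (eta : cm_sort N -> k) (heta : kform eta) :
  Phi (f m) eta = Phi m (fun x => eta (f x)).
Proof.
rewrite /Phi (hf.2 m C _ (bil_scal C heta)) big_map //.
Qed.
End M3.
Section M4.
Variable k : comNzRingType.
Variables (C : lmodType k) (D : C -> seq (C * C)) (eps : C -> k).
Notation FC := (fgComod D eps).
Notation rho M := (@cm_rho _ _ D eps M).
Notation dim M := (@cm_dim _ _ D eps M).
Notation gen M := (@cm_gen _ _ D eps M).
Notation crd M := (@cm_coord _ _ D eps M).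

Lemma kform_comp (U V : lmodType k) (f : U -> V) (e : V -> k) :
  klinear f -> kform e -> kform (fun u => e (f u)).
Proof. by move=> hf he a u v; rewrite hf he. Qed.

Lemma klin_sumZ (U V : lmodType k) (f : U -> V) (I : Type) (r : seq I) (a : I -> k) (y : I -> U) :
  klinear f -> f (\sum_(i <- r) a i *: y i) = \sum_(i <- r) a i *: f (y i).
Proof.
move=> hf; rewrite (klin_sum _ _ hf); apply: eq_bigr => i _; exact: klinZ.
Qed.

Lemma rank_iso (M N : FC) : comod_iso M N -> colin_rank M = colin_rank N.
Proof.
case=> f [hf [g fK gK]].
have hg : klinear g.
  move=> a u v; apply: (can_inj fK); by rewrite gK hf.1 !gK.
rewrite -(@indep2 _ _ D eps M _ 0 (fun j => g (gen N j)) (fun j m => crd N j (f m))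
  (fun _ => 0) (fun _ _ => 0)).
- rewrite big_ord0 addr0 rank_Phi; apply: eq_bigr => j _.
  by rewrite -(transfer hf) ?gK //; apply: cm_coord_lin.
- move=> j; apply: kform_comp; [exact: hf.1|exact: cm_coord_lin].
- by move=> j a u v; rewrite mulr0 addr0.
- move=> m; rewrite big_ord0 addr0 -(klin_sumZ _ _ _ hg) cm_dual_basis; exact: fK.
Qed.
End M4.
Section M5.
Variable k : comNzRingType.
Variables (C : lmodType k) (D : C -> seq (C * C)) (eps : C -> k).
Notation FC := (fgComod D eps).
Notation rho M := (@cm_rho _ _ D eps M).
Notation dim M := (@cm_dim _ _ D eps M).
Notation gen M := (@cm_gen _ _ D eps M).
Notation crd M := (@cm_coord _ _ D eps M).

Lemma rank_ses (M' M M'' : FC) : comod_ses M' M M'' ->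
  colin_rank M = colin_rank M' + colin_rank M''.
Proof.
case=> f [g [hf hg finj gsurj hker]].
have /fin_all_exists [mj hmj] : forall j : 'I_(dim M''), exists m : cm_sort M, g m = gen M'' j.
  by move=> j; apply: gsurj.
pose s (n : cm_sort M'') := \sum_j crd M'' j n *: mj j.
have hs : klinear s.
  move=> a u v; rewrite /s scaler_sumr -big_split; apply: eq_bigr => j _.
  by rewrite (@cm_coord_lin _ _ D eps M'') scalerDl scalerA.
have gs n : g (s n) = n.
  rewrite /s (klin_sumZ _ _ _ hg.1) -{2}(cm_dual_basis n).
  by apply: eq_bigr => j _; rewrite hmj.
have hex m : exists m', f m' = m - s (g m).
  apply/hker; by rewrite (klinD hg.1) -scaleN1r (klinZ hg.1) gs scaleN1r subrr.
pose r m := proj1_sig (constructive_indefinite_description _ (hex m)).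
have hr m : f (r m) = m - s (g m) by rewrite /r; case: constructive_indefinite_description.
have rlin : klinear r.
  move=> a u v; apply: finj; rewrite hf.1 !hr hg.1 hs.
  by rewrite scalerBr opprD addrACA.
have rf m' : r (f m') = m'.
  apply: finj; rewrite hr.
  have -> : g (f m') = 0 by apply/hker; exists m'.
  by rewrite klin0 // subr0.
rewrite -(@indep2 _ _ D eps M _ _ (fun i => f (gen M' i)) (fun i m => crd M' i (r m))
  mj (fun j m => crd M'' j (g m))).
- rewrite !rank_Phi; congr (_ + _); apply: eq_bigr => j _.
    rewrite (transfer hf); last first.
      apply: kform_comp; [exact: rlin|exact: cm_coord_lin].
    by apply: Phi_fun => x; rewrite rf.
  by rewrite -(transfer hg) ?hmj //; apply: cm_coord_lin.
- move=> i; apply: kform_comp; [exact: rlin|exact: cm_coord_lin].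
- move=> j; apply: kform_comp; [exact: hg.1|exact: cm_coord_lin].
- move=> m; rewrite -(klin_sumZ _ _ _ hf.1) cm_dual_basis hr.
  by rewrite subrK.
Qed.
End M5.
Section M6.
Variable k : comNzRingType.
Variables (C : lmodType k) (D : C -> seq (C * C)) (eps : C -> k).
Notation FC := (fgComod D eps).
Notation rho M := (@cm_rho _ _ D eps M).
Notation dim M := (@cm_dim _ _ D eps M).
Notation gen M := (@cm_gen _ _ D eps M).
Notation crd M := (@cm_coord _ _ D eps M).

Lemma tri_scal (U V W X : lmodType k) (e : U -> k) (b : V -> W -> X) :
  kform e -> bilinear_map b -> trilinear_map (fun x c1 c2 => e x *: b c1 c2).
Proof.
move=> he [hb1 hb2]; split=> [v w a x y|u w a x y|u v a x y] /=.
- by rewrite he scalerDl scalerA.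
- by rewrite hb1 scalerDr !scalerA mulrC.
- by rewrite hb2 scalerDr !scalerA mulrC.
Qed.

Lemma bil_scal2 (U V W X : lmodType k) (e : U -> k) (b : V -> W -> X) (c : W) :
  kform e -> bilinear_map b -> bilinear_map (fun x d => e x *: b d c).
Proof.
move=> he [hb1 hb2]; split=> [v a x y|u a x y] /=.
- by rewrite he scalerDl scalerA.
- by rewrite hb1 scalerDr !scalerA mulrC.
Qed.

Lemma bil_flip (V W X : lmodType k) (b : V -> W -> X) :
  bilinear_map b -> bilinear_map (fun x y => b y x).
Proof. by case=> h1 h2; split. Qed.

Definition Bsum (W : lmodType k) (b : C -> C -> W) (c : C) := \sum_(q <- D c) b q.1 q.2.
Definition Gsum (M : FC) (W : lmodType k) (e : cm_sort M -> k) (b : C -> C -> W) (c : C)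
  (m : cm_sort M) := \sum_(q <- rho M m) e q.1 *: b q.2 c.

Definition Hsum (M : FC) (W : lmodType k) (b : C -> C -> W) :=
  \sum_i \sum_j \sum_(p <- rho M (gen M i)) \sum_(q <- rho M (gen M j))
     (crd M j p.1 * crd M i q.1) *: b q.2 p.2.

Lemma key (hC : is_coalgebra D eps) (M : FC) (W : lmodType k) (b : C -> C -> W) :
  bilinear_map b -> Bsum b (colin_rank M) = Hsum M b.
Proof.
move=> hb; case: hC => hDlin _ _ _ _.
have hB : klinear (Bsum b) by exact: (rep_lin hDlin hb).
rewrite /colin_rank /tr_colin (klin_sum _ _ hB).
apply: eq_bigr => i _; rewrite (klin_sum _ _ hB).
have hci := @cm_coord_lin _ _ D eps M i.
transitivity (\sum_(p <- rho M (gen M i)) \sum_(q <- D p.2) crd M i p.1 *: b q.1 q.2).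
  by apply: eq_bigr => p _; rewrite (klinZ hB) /Bsum scaler_sumr.
rewrite -(big_allpairs_dep (h := fun p q => ((p.1, q.1), q.2))
   (F := fun x => crd M i x.1.1 *: b x.1.2 x.2)).
rewrite -(@cm_coassoc _ _ D eps M (gen M i) W _ (tri_scal hci hb)).
rewrite (big_allpairs_dep (h := fun p q => ((q.1, q.2), p.2))) /=.
rewrite [RHS]exchange_big /=; apply: eq_bigr => p _.
have hG : klinear (Gsum (crd M i) b p.2).
  exact: (rep_lin (@cm_rho_lin _ _ _ _ M) (bil_scal2 p.2 hci hb)).
transitivity (Gsum (crd M i) b p.2 p.1); first by [].
rewrite -{1}(cm_dual_basis p.1) (klin_sum _ _ hG); apply: eq_bigr => j _.
by rewrite (klinZ hG) /Gsum scaler_sumr; apply: eq_bigr => q _; rewrite scalerA.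
Qed.

Lemma Hsym (M : FC) (W : lmodType k) (b : C -> C -> W) :
  Hsum M (fun x y => b y x) = Hsum M b.
Proof.
rewrite /Hsum exchange_big /=; apply: eq_bigr => i _; apply: eq_bigr => j _.
rewrite exchange_big /=; apply: eq_bigr => p _; apply: eq_bigr => q _.
by rewrite mulrC.
Qed.

Lemma part1 (hC : is_coalgebra D eps) (M : FC) : in_coHH0 D (colin_rank M).
Proof.
move=> W b hb; rewrite big_map /=.
have := key hC M hb; rewrite /Bsum => ->.
have := key hC M (bil_flip hb); rewrite /Bsum /= => ->.
by rewrite Hsym.
Qed.
End M6.
Unset Implicit Arguments.

Theorem theorem2p23 (k : comNzRingType) (hk : fin_prod_of_fields k)
  (C : lmodType k) (D : C -> seq (C * C)) (eps : C -> k)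
  (hC : is_coalgebra D eps) :
  (forall M : fgComod D eps, in_coHH0 D (colin_rank M)) /\
  (forall x : formal_sum D eps, K0rel x -> rankZ x = 0).
Proof.
split; first by move=> M; exact: part1.
move=> x; elim => [|M N hi|M' M M'' hs|x1 y1 _ IHx _ IHy|x1 _ IH]; rewrite /rankZ.
- by rewrite big_nil.
- by rewrite !big_cons big_nil /= (rank_iso hi) mulr1z mulrN1z addr0 subrr.
- rewrite !big_cons big_nil /= (rank_ses hs) mulr1z !mulrN1z addr0.
  by rewrite -opprD subrr.
- by rewrite big_cat /= -/(rankZ x1) -/(rankZ y1) IHx IHy addr0.
- rewrite big_map /=.
  under eq_bigr do rewrite mulrNz.
  by rewrite sumrN -/(rankZ x1) IH oppr0.
Qed.
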